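(* For any activation pattern (any choice of diagonal $\{0,1\}$-matrices $R^{(\ell)}$ on the activation edges) and identity output activation $\phi = \mathrm{id}$, the restricted coboundary $\delta_\Omega$ is a square matrix with $\det \delta_\Omega = 1$. Consequently the restricted Laplacian satisfies \[ L_{\mathcal{F}_R}[\Omega,\Omega] = \delta_\Omega^T\, \delta_\Omega, \qquad \det L_{\mathcal{F}_R}[\Omega,\Omega] = 1, \] and in particular is positive definite.
   Context: Consider a feedforward ReLU network with $k$ hidden layers, layer widths $n_0,\dots,n_{k+1}$, weight matrices $W^{(\ell)}\in\mathbb{R}^{n_\ell\times n_{\ell-1}}$ and biases $b^{(\ell)}\in\mathbb{R}^{n_\ell}$. Define the extended weight matrix $\overline{W}^{(\ell)} = (W^{(\ell)}\mid \mathrm{diag}(b^{(\ell)}))$ and the extended activation $\overline{a}^{(\ell)} = (a^{(\ell)}, \mathbf{1}_{n_{\ell+1}})$, with $\overline{a}^{(0)}=\overline{\mathbf{x}}=(\mathbf{x},\mathbf{1}_{n_1})$. A cellular sheaf $\mathcal{F}$ is built on the path graph $v_x - v_{z^{(1)}} - v_{a^{(1)}} - v_{z^{(2)}} - \cdots - v_{a^{(k)}} - v_{z^{(k+1)}} - v_y$ (with $v_{a^{(0)}}\equiv v_x$), with stalks $\mathbb{R}^{n_0+n_1}$ at $v_x$, $\mathbb{R}^{n_\ell}$ at $v_{z^{(\ell)}}$, $\mathbb{R}^{n_\ell+n_{\ell+1}}$ at $v_{a^{(\ell)}}$, $\mathbb{R}^{n_{k+1}}$ at $v_y$. Writing $\mathcal{F}_{v,e}$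 for the restriction map from the stalk at vertex $v$ to the stalk at an incident edge $e$: on the weight edge $e_{z^{(\ell)}}$ (from $v_{a^{(\ell-1)}}$ to $v_{z^{(\ell)}}$, edge stalk $\mathbb{R}^{n_\ell}$) the maps are $\overline{W}^{(\ell)}$ and $I_{n_\ell}$; on the activation edge $e_{a^{(\ell)}}$ (from $v_{z^{(\ell)}}$ to $v_{a^{(\ell)}}$, edge stalk $\mathbb{R}^{n_\ell}$) they are a diagonal $0/1$ matrix $R^{(\ell)}$ and the projection $P_{n_\ell}=(I_{n_\ell}\ 0)$; on the output edge $e_y$ (from $v_{z^{(k+1)}}$ to $v_y$) they are $\phi$ and $I_{n_{k+1}}$. The coboundary is $(\delta x)_e = \mathcal{F}_{v,e}x_v - \mathcal{F}_{u,e}x_u$ for $e=u\to v$, and the sheaf Laplacian is $L=\delta^T\delta$. $\mathcal{F}_R$ denotes this sheaf with the activation pattern frozen at $R$. The fixed (boundary) coordinates $u$ are the whole input stalk at $v_x$ and the ones blocks $\mathbf{1}_{n_{\ell+1}}$ inside each $v_{a^{(\ell)}}$ stalk; the remaining free coordinates are $\omega=(z^{(1)},a^{(1)},\dots,a^{(k)},z^{(k+1)},\hat{y})$. Writing $\delta\overline{\omega}=\delta_\Omega\omega+\delta_U u$ for $\overline{\omega}=u\oplus\omega$, $\delta_\Omega$ is the restriction of the coboundary to the free coordinates and $L_{\mathcal{F}_R}[\Omega,\Omega]$ the corresponding block of the Laplacian. *)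

(* Defs.v *)
From mathcomp Require Import all_boot all_order all_algebra.
Set Implicit Arguments. Unset Strict Implicit. Unset Printing Implicit Defensive.
Import Order.TTheory GRing.Theory Num.Theory.
Local Open Scope ring_scope.

(* Entry of a matrix accessed with natural-number indices (0 outside the range). *)
Definition mxn (R : pzRingType) m n (M : 'M[R]_(m, n)) (r c : nat) : R :=
  match @insub _ (fun x => x < m)%N 'I_m r, @insub _ (fun x => x < n)%N 'I_n c with
  | Some r', Some c' => M r' c'
  | _, _ => 0
  end.

(* Vertices of the path graph are numbered 0 .. 2k+2 in path order:
     0 = v_x (= v_{a^(0)}), 2l-1 = v_{z^(l)} (1<=l<=k+1),
     2l = v_{a^(l)} (1<=l<=k), 2k+2 = v_y.
   Edge i (0 <= i <= 2k+1) goes from vertex i to vertex i+1: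
     2l-2 = e_{z^(l)}, 2l-1 = e_{a^(l)}, 2k+1 = e_y. *)
Definition vdim (k : nat) (n : nat -> nat) (j : nat) : nat :=
  if j == k.*2.+2 then n k.+1
  else if odd j then n (j.+1)./2
  else (n j./2 + n (j./2).+1)%N.            (* v_{a^(l)}, l = j/2 ; stalk (a, 1) *)

Definition edim (k : nat) (n : nat -> nat) (i : nat) : nat :=
  if odd i then n (i.+1)./2 else n (i./2).+1.

Section Sheaf.
Variables (R : pzRingType) (k : nat) (n : nat -> nat).
Variables (W : forall l, 'M[R]_(n l, n l.-1)) (b : forall l, 'rV[R]_(n l))
          (Rm : forall l, 'M[R]_(n l)) (phi : 'M[R]_(n k.+1)).

Definition Wbar l : 'M[R]_(n l, n l.-1 + n l) := row_mx (W l) (diag_mx (b l)).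
Definition Pproj l : 'M[R]_(n l, n l + n l.+1) := row_mx 1%:M 0.

(* block (edge i, vertex j) of the coboundary: for e = u -> v,
   (delta x)_e = F_{v,e} x_v - F_{u,e} x_u *)
Definition blk (i j r c : nat) : R :=
  if ~~ odd i then (* weight edge e_{z^(l)}, l = i/2+1, from v_{a^(l-1)} to v_{z^(l)} *)
    let l := (i./2).+1 in
    if j == i then - mxn (Wbar l) r c
    else if j == i.+1 then mxn (1%:M : 'M[R]_(n l)) r c else 0
  else if i == k.*2.+1 then (* output edge e_y from v_{z^(k+1)} to v_y *)
    if j == i then - mxn phi r c
    else if j == i.+1 then mxn (1%:M : 'M[R]_(n k.+1)) r c else 0
  else (* activation edge e_{a^(l)}, l = (i+1)/2, from v_{z^(l)} to v_{a^(l)} *)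
    let l := (i.+1)./2 in
    if j == i then - mxn (Rm l) r c
    else if j == i.+1 then mxn (Pproj l) r c else 0.

Definition NE := (\sum_(i < k.*2.+2) edim k n i)%N.
Definition NV := (\sum_(j < k.*2.+3) vdim k n j)%N.

Definition delta : 'M[R]_(NE, NV) :=
  \mxblock_(i < k.*2.+2, j < k.*2.+3)
     (\matrix_(r < edim k n i, c < vdim k n j) blk i j r c).

Definition Lap : 'M[R]_NV := delta^T *m delta.

End Sheaf.

(* free coordinates: the z-stalks, the a-part of each v_{a^(l)} (1<=l<=k), and v_y *)
Definition freeloc (k : nat) (n : nat -> nat) (j o : nat) : bool :=
  [|| odd j, j == k.*2.+2 | (0 < j)%N && (o < n j./2)%N].

Definition pre (k : nat) (n : nat -> nat) (j : nat) : nat :=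
  (\sum_(i < j) vdim k n i)%N.

Definition Omega (k : nat) (n : nat -> nat) : {set 'I_(NV k n)} :=
  [set c : 'I_(NV k n) | [exists j : 'I_(k.*2.+3),
     [&& (pre k n j <= c)%N, (c < pre k n j + vdim k n j)%N
       & freeloc k n j (c - pre k n j)]]].

Definition nOmega k n : nat := #|Omega k n|.

Definition fOmega k n : 'I_(nOmega k n) -> 'I_(NV k n) := enum_val (A := Omega k n).

Definition deltaOmega (R : pzRingType) k n W b Rm phi : 'M[R]_(NE k n, nOmega k n) :=
  colsub (@fOmega k n) (@delta R k n W b Rm phi).

Definition LapOmega (R : pzRingType) k n W b Rm phi : 'M[R]_(nOmega k n) :=
  mxsub (@fOmega k n) (@fOmega k n) (@Lap R k n W b Rm phi).

Arguments deltaOmega {R} k n W b Rm phi.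
Arguments LapOmega {R} k n W b Rm phi.

(* Main.v *)
Require Import Defs.
From mathcomp Require Import all_boot all_order all_algebra zify.
Import Order.TTheory GRing.Theory Num.Theory.

Lemma tcases t : exists s, t = s.*2 \/ t = (s.*2).+1.
Proof. elim: t => [|t [s [->|->]]]; [exists 0; left | exists s; right | exists s.+1; left]; by rewrite ?doubleS. Qed.
Lemma h21 s : ((s.*2).+1)./2 = s. Proof. exact: (half_bit_double s true). Qed.
Lemma h2 s : (s.*2)./2 = s. Proof. exact: doubleK. Qed.
Lemma odd21 s : odd (s.*2).+1. Proof. by rewrite /= odd_double. Qed.
Lemma neqdd s k : (s.*2 == k.*2.+1) = false.
Proof. apply/negbTE/negP => /eqP; lia. Qed.

Lemma ew k n t : t < k.*2.+2 -> edim k n t <= vdim k n t.+1.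
Proof.
have [s [->|->]] := tcases t => ht; rewrite /edim /vdim.
  by rewrite odd_double odd21 eqSS neqdd /= ?h2 ?h21 /=.
rewrite odd21 /= odd_double ?h2 ?h21 /=.
case: eqP => [E|_]; last exact: leq_addr.
by have -> : s = k by lia.
Qed.

Lemma freeE k n t o : t < k.*2.+2 -> o < vdim k n t.+1 -> freeloc k n t.+1 o = (o < edim k n t).
Proof.
rewrite /freeloc /edim /vdim.
have [s [->|->]] := tcases t => ht; rewrite ?odd21 ?odd_double /= ?h2 ?h21 /= => ho.
  by move: ho; case: eqP => [E|_ ->]; first lia.
rewrite odd_double /= in ho *. case: eqP ho => [E|_] ho; first by have -> : s = k by lia. by [].
Qed.

Lemma free0 k n o : freeloc k n 0 o = false.
Proof. by rewrite /freeloc. Qed.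

Section Gen.
Variables (m : nat) (p : 'I_m -> nat).
Local Notation S t := (\sum_(i < m | (i < t)%N) p i)%N.

Lemma sum_mono (t t' : 'I_m) : (t < t')%N -> (S t + p t <= S t')%N.
Proof.
move=> ltt; rewrite [X in (_ <= X)%N](bigD1 t) //= addnC leq_add2l.
rewrite big_mkcond [X in (_ <= X)%N]big_mkcond /=; apply: leq_sum => i _.
case: ifP => // hi; rewrite (ltn_trans hi ltt) /=.
by have -> : (i != t) by rewrite neq_ltn hi.
Qed.

Lemma Rank_lt (t t' : 'I_m) (o : 'I_(p t)) (o' : 'I_(p t')) :
  (t < t')%N \/ (t = t' /\ (o < o')%N) -> (tagnat.Rank t o < tagnat.Rank t' o')%N.
Proof.
rewrite !tagnat.RankEsum; case=> [lt|[E lo]].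
  have := @sum_mono t t' lt; have := ltn_ord o; lia.
move: o' lo; rewrite -E => o' lo; lia.
Qed.

Lemma lt_Rank_inv (r c : 'I_(\sum_i p i)) : (r < c)%N ->
  (tagnat.sig1 r <= tagnat.sig1 c)%N /\
  (tagnat.sig1 r = tagnat.sig1 c -> (tagnat.sig2 r < tagnat.sig2 c)%N).
Proof.
have Er := tagnat.rect r; have Ec := tagnat.rect c.
move: (tagnat.sig2 r) (tagnat.sig2 c) Er Ec; set t := tagnat.sig1 r; set t' := tagnat.sig1 c.
move=> o o' Er Ec lt; split.
  rewrite leqNgt; apply/negP => h; have := @sum_mono t' t h; have := ltn_ord o'; lia.
move=> E; move: o' Ec; rewrite -E => o' Ec; lia.
Qed.

End Gen.

Section Cnt.
Variables (m N : nat) (A : {set 'I_N}).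

Let cnt (x : 'I_N) := #|[set y in A | (y < x)%N]|.

Lemma cnt_img (f : 'I_m -> 'I_N) :
  (forall i j : 'I_m, (i < j)%N -> (f i < f j)%N) -> (forall y, y \in A <-> exists i, y = f i) ->
  forall i : 'I_m, cnt (f i) = #|[set j : 'I_m | (j < i)%N]|.
Proof.
move=> finc fimg i; rewrite /cnt.
have finj : injective f.
  move=> a b E; case: (ltngtP a b) => [/finc|/finc|/val_inj //]; by rewrite E ltnn.
have -> : [set y in A | (y < f i)%N] = f @: [set j : 'I_m | (j < i)%N].
  apply/setP => y; rewrite !inE; apply/andP/imsetP.
    case=> /fimg [j ->] lt; exists j => //; rewrite inE.
    case: (ltngtP j i) => // h.
      by have := finc _ _ h; rewrite ltnNge (ltnW lt).
    by move: lt; rewrite (val_inj h) ltnn.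
  case=> j; rewrite inE => lt ->; split; last exact: finc.
  by apply/fimg; exists j.
by rewrite card_imset.
Qed.

Lemma incr_img_eq (f g : 'I_m -> 'I_N) :
  (forall i j : 'I_m, (i < j)%N -> (f i < f j)%N) -> (forall i j : 'I_m, (i < j)%N -> (g i < g j)%N) ->
  (forall y, y \in A <-> exists i, y = f i) -> (forall y, y \in A <-> exists i, y = g i) ->
  f =1 g.
Proof.
move=> finc ginc fimg gimg i.
have cf := cnt_img f finc fimg i; have cg := cnt_img g ginc gimg i.
have key : forall a b : 'I_N, a \in A -> b \in A -> (a < b)%N -> (cnt a < cnt b)%N.
  move=> a b aA bA lt; apply: proper_card; apply/properP; split.
    by apply/subsetP => y; rewrite !inE => /andP [-> /ltn_trans]; apply.
  by exists a; rewrite !inE ?aA ?lt // ltnn andbF.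
have fA : f i \in A by apply/fimg; exists i.
have gA : g i \in A by apply/gimg; exists i.
apply/val_inj; case: (ltngtP (f i) (g i)) => // lt.
  by have := key _ _ fA gA lt; rewrite cf cg ltnn.
by have := key _ _ gA fA lt; rewrite cf cg ltnn.
Qed.
End Cnt.

Lemma enum_val_incr N (A : {set 'I_N}) (a b : 'I_#|A|) : (a < b)%N -> (enum_val a < enum_val b)%N.
Proof.
move=> lt.
have tr : transitive (fun x y : 'I_N => (x < y)%N) by move=> x y z; exact: ltn_trans.
have srt : sorted (fun x y : 'I_N => (x < y)%N) (enum A).
  rewrite /enum_mem -enumT sorted_filter //.
  by rewrite -(@sorted_map _ _ val (fun x y => x < y)%N) val_enum_ord iota_ltn_sorted.
rewrite /enum_val (set_nth_default (enum_default a) (enum_default b)) ?cardE; last first.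
  by rewrite -cardE; exact: ltn_ord.
apply: (sorted_ltn_nth tr) => //; rewrite inE -cardE; exact: ltn_ord.
Qed.

Section Sh.
Variables (k : nat) (n : nat -> nat).
Definition pE (i : 'I_(k.*2.+2)) : nat := edim k n i.
Definition pV (j : 'I_(k.*2.+3)) : nat := vdim k n j.

Definition sE1 (r : 'I_(NE k n)) : 'I_(k.*2.+2) := @tagnat.sig1 _ pE r.
Definition sE2 (r : 'I_(NE k n)) : 'I_(pE (sE1 r)) := @tagnat.sig2 _ pE r.
Definition sV1 (r : 'I_(NV k n)) : 'I_(k.*2.+3) := @tagnat.sig1 _ pV r.
Definition sV2 (r : 'I_(NV k n)) : 'I_(pV (sV1 r)) := @tagnat.sig2 _ pV r.

Lemma ewI (t : 'I_(k.*2.+2)) : (pE t <= pV (lift ord0 t))%N.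
Proof. by rewrite /pV lift0; exact: ew (ltn_ord t). Qed.

Definition gO (r : 'I_(NE k n)) : 'I_(NV k n) :=
  @tagnat.Rank _ pV (lift ord0 (sE1 r)) (widen_ord (ewI (sE1 r)) (sE2 r)).

Lemma gO_incr (r c : 'I_(NE k n)) : (r < c)%N -> (gO r < gO c)%N.
Proof.
move=> /lt_Rank_inv [h1 h2]; apply: Rank_lt.
case: (ltngtP (tagnat.sig1 r) (tagnat.sig1 c)) h1 h2 => // [lt _ _|E _ /(_ (val_inj E)) lt2].
  by left; rewrite !lift0.
by right; split => //; congr (lift ord0 _); apply/val_inj.
Qed.

Lemma preE (j : 'I_(k.*2.+3)) : pre k n j = (\sum_(i < k.*2.+3 | (i < j)%N) pV i)%N.
Proof. rewrite /pre (big_ord_widen (k.*2.+3) (fun i => vdim k n i)) //; exact: ltnW (ltn_ord j). Qed.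

Lemma memOmega (y : 'I_(NV k n)) : (y \in Omega k n) = freeloc k n (sV1 y) (sV2 y).
Proof.
have Ey : nat_of_ord y = (\sum_(i < k.*2.+3 | (i < sV1 y)%N) pV i + sV2 y)%N := @tagnat.rect _ pV y.
rewrite inE; apply/existsP/idP.
  case=> j /and3P [h1 h2 h3].
  have ho : (y - pre k n j < pV j)%N by rewrite /pV; lia.
  set o := Ordinal ho.
  have Ey' : y = @tagnat.Rank _ pV j o.
    apply: val_inj; change (nat_of_ord y = nat_of_ord (@tagnat.Rank _ pV j o)).
    rewrite tagnat.RankEsum -preE /=; lia.
  have e1 : sV1 y = j by rewrite /sV1 Ey' tagnat.Rank1K.
  have e2 : (sV2 y : nat) = o by rewrite /sV2 /sV1 Ey' tagnat.Rank2K.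
  by rewrite e2 e1.
move=> h; exists (sV1 y); rewrite preE.
have lt : (sV2 y < vdim k n (sV1 y))%N := ltn_ord (sV2 y).
apply/and3P; split; [lia | lia | ].
by rewrite (_ : y - _ = sV2 y)%N //; lia.
Qed.


Lemma gO1 r : sV1 (gO r) = lift ord0 (sE1 r).
Proof. exact: tagnat.Rank1K. Qed.
Lemma gO2 r : (sV2 (gO r) : nat) = sE2 r.
Proof. by rewrite /sV2 /sV1 /gO tagnat.Rank2K. Qed.

Lemma imgO (y : 'I_(NV k n)) : y \in Omega k n <-> exists r, y = gO r.
Proof.
rewrite memOmega; split; last first.
  case=> r ->; rewrite gO2 gO1 lift0 freeE //.
  exact: leq_trans (ltn_ord (sE2 r)) (@ew k n _ (ltn_ord (sE1 r))).
move=> h.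
have nz : (0 < sV1 y)%N.
  by rewrite lt0n; apply/negP => /eqP E; move: h; rewrite E free0.
set t := (sV1 y).-1; have ht : (t < k.*2.+2)%N by have := ltn_ord (sV1 y); lia.
have Et : (sV1 y : nat) = t.+1 by lia.
have ho : (sV2 y < edim k n t)%N.
  rewrite -freeE // -?Et //; have := ltn_ord (sV2 y); by rewrite /pV Et.
exists (@tagnat.Rank _ pE (Ordinal ht) (Ordinal ho)).
have r1 : sE1 (@tagnat.Rank _ pE (Ordinal ht) (Ordinal ho)) = Ordinal ht := tagnat.Rank1K _.
have r2 : (sE2 (@tagnat.Rank _ pE (Ordinal ht) (Ordinal ho)) : nat) = sV2 y.
  by rewrite /sE2 /sE1 tagnat.Rank2K.
apply/eqP; rewrite -[X in X == _](@tagnat.sig2K _ pV y) /gO -val_eqE tagnat.eq_Rank.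
apply/andP; split; last by rewrite /= r2.
rewrite r1; apply/eqP/val_inj.
by change (nat_of_ord (sV1 y) = nat_of_ord (lift ord0 (Ordinal ht))); rewrite lift0 Et.
Qed.

Lemma gO_inj : injective gO.
Proof. by move=> a b E; case: (ltngtP a b) => [/gO_incr|/gO_incr|/val_inj //]; rewrite E ltnn. Qed.

Lemma nOmegaE : nOmega k n = NE k n.
Proof.
have -> : nOmega k n = #|gO @: setT|.
  rewrite /nOmega; apply: eq_card => y; apply/idP/imsetP.
    by case/imgO => r ->; exists r.
  by case=> r _ ->; apply/imgO; exists r.
by rewrite card_imset ?cardsT ?card_ord //; exact: gO_inj.
Qed.

Lemma fOmegaE (H : nOmega k n = NE k n) (i : 'I_(nOmega k n)) :
  fOmega i = gO (cast_ord H i).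
Proof.
have finc : forall a b : 'I_(NE k n), (a < b)%N ->
    (fOmega (cast_ord (esym H) a) < fOmega (cast_ord (esym H) b))%N.
  by move=> a b lt; rewrite /fOmega; apply: enum_val_incr.
have fimg : forall y, y \in Omega k n <-> exists j, y = fOmega (cast_ord (esym H) j).
  move=> y; split.
    move=> yA; exists (cast_ord H (enum_rank_in yA y)); rewrite cast_ordK.
    by rewrite /fOmega enum_rankK_in.
  by case=> j ->; exact: enum_valP.
have := @incr_img_eq _ _ (Omega k n) _ gO finc gO_incr fimg imgO (cast_ord H i).
by rewrite cast_ordK.
Qed.
End Sh.

Local Open Scope ring_scope.

Section Mx.
Variables (R : pzRingType) (k : nat) (n : nat -> nat).
Variables (W : forall l, 'M[R]_(n l, n l.-1)) (b : forall l, 'rV[R]_(n l))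
          (Rm : forall l, 'M[R]_(n l)) (phi : 'M[R]_(n k.+1)).

Lemma mxnE m m' (M : 'M[R]_(m, m')) r c (hr : (r < m)%N) (hc : (c < m')%N) :
  mxn M r c = M (Ordinal hr) (Ordinal hc).
Proof. by rewrite /mxn (insubT (fun x => (x < m)%N) hr) (insubT (fun x => (x < m')%N) hc). Qed.

Lemma mxn1 m r c : (r < m)%N -> (c < m)%N -> mxn (1%:M : 'M[R]_m) r c = (r == c)%:R.
Proof. by move=> hr hc; rewrite (mxnE _ _ _ _ _ hr hc) mxE. Qed.

Lemma mxnP l r c : (r < n l)%N -> (c < n l)%N -> mxn (Pproj R n l) r c = (r == c)%:R.
Proof.
move=> hr hc; have hc' : (c < n l + n l.+1)%N by apply: leq_trans hc (leq_addr _ _).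
rewrite (mxnE _ _ _ _ _ hr hc') (_ : Ordinal hc' = lshift _ (Ordinal hc)); last exact: val_inj.
by rewrite /Pproj row_mxEl mxE.
Qed.

Lemma deltaE (r : 'I_(NE k n)) (t : 'I_(k.*2.+3)) (o : 'I_(pV k n t)) :
  delta W b Rm phi r (@tagnat.Rank _ (pV k n) t o) = blk W b Rm phi (sE1 k n r) t (sE2 k n r) o.
Proof.
have := congr1 (fun M : 'M[R]_(edim k n (sE1 k n r), vdim k n t) => M (sE2 k n r) o)
  (mxblockK (fun (i : 'I_(k.*2.+2)) (j : 'I_(k.*2.+3)) =>
     \matrix_(r < edim k n i, c < vdim k n j) blk W b Rm phi i j r c) (sE1 k n r) t).
rewrite /submxblock !mxE /= => <-.
by rewrite /sE2 /sE1 tagnat.sig2K.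
Qed.

Lemma blk_far t j o o' : j != t -> j != t.+1 -> blk W b Rm phi t j o o' = 0.
Proof. by move=> /negbTE h1 /negbTE h2; rewrite /blk h1 h2; case: ifP => _ //; case: ifP. Qed.
End Mx.

Lemma blk_next (R : pzRingType) k n W b Rm t o o' : (t < k.*2.+2)%N -> (o < edim k n t)%N -> (o' < edim k n t)%N ->
  @blk R k n W b Rm 1%:M t t.+1 o o' = (o == o')%:R.
Proof.
rewrite /blk /edim eqxx (_ : (t.+1 == t) = false); last by apply/negbTE; rewrite neq_ltn ltnSn orbT.
case: ifP => ev ht ho ho' /=; last by rewrite mxn1.
case: eqP => [Et|_]; last by rewrite mxnP.
by rewrite Et /= doubleK in ho ho'; rewrite mxn1.
Qed.

Section Main.
Variables (R : realFieldType) (k : nat) (n : nat -> nat).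
Variables (W : forall l, 'M[R]_(n l, n l.-1)) (b : forall l, 'rV[R]_(n l))
          (Rm : forall l, 'M[R]_(n l)).

Lemma Mentry (i j : 'I_(NE k n)) :
  castmx (erefl (NE k n), nOmegaE k n) (deltaOmega k n W b Rm 1%:M) i j
  = @blk R k n W b Rm 1%:M (sE1 k n i) (sE1 k n j).+1 (sE2 k n i) (sE2 k n j).
Proof.
rewrite castmxE /deltaOmega mxE cast_ord_id (@fOmegaE k n (nOmegaE k n)) cast_ordKV.
by rewrite /gO deltaE lift0.
Qed.

Lemma detM : \det (castmx (erefl (NE k n), nOmegaE k n) (deltaOmega k n W b Rm 1%:M)) = 1.
Proof.
rewrite det_trig; last first.
  apply/is_trig_mxP => i j lt; rewrite Mentry.
  have [h1 h2] := @lt_Rank_inv _ (pE k n) i j lt.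
  case: (ltngtP (sE1 k n i) (sE1 k n j)) h1 h2 => // [lt1 _ _|E _ /(_ (val_inj E)) lt2].
    by apply: blk_far; apply/negP => /eqP; lia.
  rewrite -E blk_next ?ltn_ord //.
  - by rewrite ltn_eqF.
  - by rewrite E; exact: ltn_ord.
rewrite big1 // => i _; rewrite Mentry blk_next ?eqxx //; exact: ltn_ord.
Qed.
End Main.

Lemma detAA (R : comNzRingType) m N (H : m = N) (A : 'M[R]_(N, m)) :
  \det (A^T *m A) = \det (castmx (erefl N, H) A) ^+ 2.
Proof. by subst N; rewrite castmx_id det_mulmx det_tr expr2. Qed.

Lemma posdefAA (R : realFieldType) m N (H : m = N) (A : 'M[R]_(N, m)) :
  \det (castmx (erefl N, H) A) = 1 ->
  forall v : 'cV_m, v != 0 -> 0 < (v^T *m (A^T *m A) *m v) 0 0.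
Proof.
subst N; rewrite castmx_id => dA v nz.
have uA : A \in unitmx by rewrite unitmxE dA unitr1.
have Av : A *m v != 0.
  by apply: contra nz => /eqP Av0; rewrite -(mulKmx uA v) Av0 mulmx0.
have [j Aj] : exists j, (A *m v) j 0 != 0.
  apply/existsP; apply: contraR Av; rewrite negb_exists => /forallP H.
  by apply/eqP/matrixP => i c; rewrite ord1 [RHS]mxE; apply/eqP; have := H i; rewrite negbK.
rewrite !mulmxA -trmx_mul -mulmxA mxE (bigD1 j) //=.
apply: ltr_wpDr.
  by apply: sumr_ge0 => i _; rewrite mxE -expr2 sqr_ge0.
by rewrite mxE -expr2 lt0r sqr_ge0 andbT expf_eq0 /=.
Qed.


Theorem lemma3p2 (R : realFieldType) (k : nat) (n : nat -> nat)
  (W : forall l, 'M[R]_(n l, n l.-1)) (b : forall l, 'rV[R]_(n l))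
  (Rm : forall l, 'M[R]_(n l)) :
  (forall l, (1 <= l <= k)%N ->
     is_diag_mx (Rm l) /\ forall i, Rm l i i = 0 \/ Rm l i i = 1) ->
  exists H : nOmega k n = NE k n,
    \det (castmx (erefl (NE k n), H) (deltaOmega k n W b Rm 1%:M)) = 1
    /\ LapOmega k n W b Rm 1%:M = (deltaOmega k n W b Rm 1%:M)^T *m deltaOmega k n W b Rm 1%:M
    /\ \det (LapOmega k n W b Rm 1%:M) = 1
    /\ (forall v : 'cV[R]_(nOmega k n),
          v != 0 -> 0 < (v^T *m LapOmega k n W b Rm 1%:M *m v) 0 0).
Proof.
move=> _; exists (nOmegaE k n).
have dM := @detM R k n W b Rm.
have LE : LapOmega k n W b Rm 1%:M = (deltaOmega k n W b Rm 1%:M)^T *m deltaOmega k n W b Rm 1%:M.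
  apply/matrixP => i j; rewrite /LapOmega /deltaOmega /Lap !mxE.
  by apply: eq_bigr => r _; rewrite !mxE.
split => //; split => //; split.
  by rewrite LE (@detAA R _ _ (nOmegaE k n)) dM expr1n.
by rewrite LE; exact: posdefAA dM.
Qed.
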